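(* Let $G$ be a connected graph of order $n \ge 2$. Then $\dim_{1,f}(G)=\frac{n}{2}$ if and only if $G \in H[\mathcal{K} \cup \overline{\mathcal{K}}]$ for some connected graph $H$.
   Context: All graphs are finite, simple, undirected and connected. $d(x,y)$ is the length of a shortest $x$–$y$ path in $G$. For a positive integer $k$, $d_k(x,y)=\min\{d(x,y),k+1\}$ and $R_k\{x,y\}=\{z\in V(G): d_k(x,z)\neq d_k(y,z)\}$. For a function $g$ on $V(G)$ and $U\subseteq V(G)$, $g(U)=\sum_{s\in U}g(s)$. A function $h:V(G)\to[0,1]$ is a $k$-truncated resolving function of $G$ if $h(R_k\{x,y\})\ge 1$ for all distinct $x,y\in V(G)$; $\dim_{k,f}(G)$ is the minimum of $h(V(G))$ over all such $h$ (here $k=1$). Let $\mathcal{K}=\{K_a: a\ge 2\}$ (complete graphs) and $\overline{\mathcal{K}}=\{\overline{K}_b: b\ge 2\}$ (edgeless graphs). For a connected graph $H$, $H[\mathcal{K}\cup\overline{\mathcal{K}}]$ is the family of graphs obtained from $H$ by replacing each vertex $u_i\in V(H)$ by a graph $H_i\in\mathcal{K}\cup\overline{\mathcal{K}}$, where each vertex of $H_i$ is adjacent to each vertex of $H_j$ ($i\ne j$) if and only if $u_iu_j\in E(H)$. *)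

(* Defs.v *)
From mathcomp Require Import all_boot all_order all_algebra.
Set Implicit Arguments. Unset Strict Implicit. Unset Printing Implicit Defensive.
Import Order.TTheory GRing.Theory Num.Theory.

Definition simple_graph (T : finType) (e : rel T) : Prop :=
  symmetric e /\ irreflexive e.

Definition connected_graph (T : finType) (e : rel T) : Prop :=
  forall x y : T, connect e x y.

Fixpoint walk_le (T : finType) (e : rel T) (m : nat) (x y : T) : bool :=
  match m with
  | 0 => x == y
  | m'.+1 => walk_le e m' x y || [exists z, e x z && walk_le e m' z y]
  end.

(* d_k(x,y) = min(d(x,y), k+1): the number of i in {0,..,k} with d(x,y) > i. *)
Definition dtrunc (T : finType) (e : rel T) (k : nat) (x y : T) : nat :=
  \sum_(i < k.+1) ~~ walk_le e i x y.

Definition Rk (T : finType) (e : rel T) (k : nat) (x y : T) : {set T} :=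
  [set z | dtrunc e k x z != dtrunc e k y z].

Local Open Scope ring_scope.

Definition trunc_resolving_fun (R : realFieldType) (T : finType) (e : rel T)
    (k : nat) (h : T -> R) : Prop :=
  (forall v, 0 <= h v <= 1) /\
  (forall x y : T, x != y -> 1 <= \sum_(z in Rk e k x y) h z).

Definition is_frac_trunc_dim (R : realFieldType) (T : finType) (e : rel T)
    (k : nat) (r : R) : Prop :=
  (exists h : T -> R, trunc_resolving_fun e k h /\ \sum_(v : T) h v = r) /\
  (forall h : T -> R, trunc_resolving_fun e k h -> r <= \sum_(v : T) h v).

(* G (up to isomorphism) lies in H[K ∪ K̄] for some connected graph H:
   a vertex map f : V(G) -> V(H) onto, each fibre H_i of size >= 2 that is
   either complete or edgeless, and for vertices in different fibres,
   adjacency in G iff the fibres' indices are adjacent in H. *)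
Definition in_lex_family (T : finType) (e : rel T) : Prop :=
  exists (U : finType) (eH : rel U) (f : T -> U),
    [/\ simple_graph eH, connected_graph eH,
        (forall u : U, 2 <= #|[set x | f x == u]|)%N,
        (forall u : U,
            (forall x y, f x = u -> f y = u -> x != y -> e x y) \/
            (forall x y, f x = u -> f y = u -> ~~ e x y)) &
        (forall x y, f x != f y -> e x y = eH (f x) (f y))].

(* Main.v *)
Require Import Defs.
From mathcomp Require Import all_boot all_order all_algebra.
From mathcomp Require Import lra.
Import Order.TTheory GRing.Theory Num.Theory.
Set Implicit Arguments. Unset Strict Implicit. Unset Printing Implicit Defensive.
Local Open Scope ring_scope.

Section Twins.
Variables (T : finType) (e : rel T).
Hypothesis esym : symmetric e.
Hypothesis eirr : irreflexive e.

Lemma ex1 a b : [exists w, e a w && (w == b)] = e a b.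
Proof.
apply/existsP/idP => [[w /andP[H /eqP<-]]//|H]; exists b; by rewrite H eqxx.
Qed.

Lemma inRk x y z : x != y ->
  (z \in Rk e 1 x y) = [|| z == x, z == y | e x z != e y z].
Proof.
move=> xy; have yx : (y == x) = false by rewrite eq_sym (negbTE xy).
rewrite inE /dtrunc !big_ord_recr !big_ord0 /= !ex1.
case: (eqVneq z x) => [->|zx] /=; first by rewrite yx; case: (e y x).
case: (eqVneq z y) => [->|zy] //=.
by case: (e x z); case: (e y z).
Qed.

Definition twin x y := (x != y) && [forall z, (z != x) && (z != y) ==> (e x z == e y z)].

Lemma twinP x y : reflect (x != y /\ forall z, z != x -> z != y -> e x z = e y z) (twin x y).
Proof.
apply: (iffP andP) => [[xy /forallP H]|[xy H]]; split => //.
  by move=> z zx zy; apply/eqP; move/implyP: (H z); apply; rewrite zx zy.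
by apply/forallP => z; apply/implyP => /andP[zx zy]; rewrite H.
Qed.

Lemma twin_sym x y : twin x y -> twin y x.
Proof.
move/twinP=> [xy H]; apply/twinP; split; first by rewrite eq_sym.
by move=> z zy zx; rewrite H.
Qed.

Lemma twin_trans x y z : twin x y -> twin y z -> x != z -> twin x z.
Proof.
move=> /twinP[xy Hxy] /twinP[yz Hyz] xz; apply/twinP; split => // w wx wz.
case: (eqVneq w y) => [->|wy]; last by rewrite Hxy // Hyz.
have zy : z != y by rewrite eq_sym.
have zx : z != x by rewrite eq_sym.
have h1 : e x z = e y z := Hxy z zx zy.
have h2 : e y x = e z x := Hyz x xy xz.
by rewrite [e x y]esym h2 [e z x]esym h1 esym.
Qed.

Lemma twin_neq x y : twin x y -> x != y.
Proof. by case/andP. Qed.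


Variable R : realFieldType.

Lemma sum2_le (h : T -> R) (A : {set T}) a b : (forall v, 0 <= h v) ->
  a != b -> a \in A -> b \in A -> h a + h b <= \sum_(z in A) h z.
Proof.
move=> h0 ab aA bA; rewrite (bigD1 a) //= (bigD1 b) /=; last by rewrite bA eq_sym.
by rewrite addrA lerDl sumr_ge0.
Qed.

Lemma twin_sum (h : T -> R) x y : twin x y -> \sum_(z in Rk e 1 x y) h z = h x + h y.
Proof.
move=> txy; have /twinP[xy Hxy] := txy.
have -> : Rk e 1 x y = [set x; y].
  apply/setP => z; rewrite inRk // !inE.
  case: (eqVneq z x) => [//|zx]; case: (eqVneq z y) => [//|zy] /=.
  by rewrite Hxy // eqxx.
by rewrite big_setU1 /= ?inE // big_set1.
Qed.

Lemma lower (h : T -> R) : trunc_resolving_fun e 1 h ->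
  (forall x, exists y, twin x y) -> #|T|%:R / 2 <= \sum_v h v.
Proof.
case=> hb hr allt.
have h0 v : 0 <= h v by case/andP: (hb v).
have hp x y : twin x y -> 1 <= h x + h y.
  by move=> t; rewrite -twin_sum //; apply: hr; exact: twin_neq.
pose t x := odflt x [pick y | twin x y].
have tt x : twin x (t x).
  rewrite /t; case: pickP => //= H; case: (allt x) => y; by rewrite H.
pose g v := h v - 1/2.
have -> : \sum_v h v = \sum_v g v + #|T|%:R / 2.
  rewrite /g sumrB sumr_const -mulr_natl cardE -cardT; lra.
suff: 0 <= \sum_v g v by lra.
pose S := [set x | h x < 1/2].
have tS x : x \in S -> t x \notin S.
  rewrite !inE => hx; have := hp _ _ (tt x); rewrite -leNgt; lra.
have tinj : {in S &, injective t}.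
  move=> x x' xS x'S txx'; apply/eqP; apply/negP => /negP xx'.
  have tw : twin x x'.
    apply: (twin_trans (tt x) _ xx'); rewrite txx'; apply: twin_sym; exact: tt.
  move: xS x'S (hp _ _ tw); rewrite !inE; lra.
rewrite (bigID (fun v => v \in S)) /=.
rewrite [X in _ + X](bigID (fun v => v \in t @: S)) /=.
have -> : \sum_(i | (i \notin S) && (i \in t @: S)) g i = \sum_(i in t @: S) g i.
  apply: eq_bigl => v; case: (boolP (v \in t @: S)) => [/imsetP[x xS ->]|]; last by rewrite andbF.
  by rewrite tS.
rewrite big_imset //= addrA -big_split /=.
apply: addr_ge0; apply: sumr_ge0 => v.
  by move=> vS; have := hp _ _ (tt v); rewrite /g; lra.
by case/andP=> vS _; move: vS; rewrite inE -leNgt /g; lra.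
Qed.


Lemma half_witness : exists h : T -> R, trunc_resolving_fun e 1 h /\ \sum_v h v = #|T|%:R / 2.
Proof.
exists (fun _ => 1/2); split; last by rewrite sumr_const -mulr_natl cardE -cardT; lra.
split => [v|x y xy]; first by apply/andP; split; lra.
have h0 : forall v : T, 0 <= (fun _ => 1/2 : R) v by move=> v /=; lra.
have := sum2_le h0 (A := Rk e 1 x y) xy; rewrite !inRk // !eqxx orbT /= => H.
apply: le_trans (H isT isT); clear H h0; lra.
Qed.

Lemma notwin_upper v : (forall y, ~~ twin v y) ->
  exists h : T -> R, trunc_resolving_fun e 1 h /\ \sum_z h z + 1/2 = #|T|%:R / 2.
Proof.
move=> nt.
have key y : y != v -> exists z, [/\ z != y, z != v & e v z != e y z].
  move=> yv; have : ~~ [forall z, (z != v) && (z != y) ==> (e v z == e y z)].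
    by move: (nt y); rewrite /twin eq_sym yv.
  rewrite negb_forall => /existsP[z]; rewrite negb_imply => /andP[/andP[zv zy] ne].
  by exists z; split.
pose h z : R := if z == v then 0 else 1/2.
have h0 z : 0 <= h z by rewrite /h; case: (z == v) => //; lra.
exists h; split; last first.
  have E : #|T|%:R / 2 = \sum_(i : T) (1/2 : R).
    by rewrite sumr_const -mulr_natl cardE -cardT; lra.
  rewrite E (bigD1 v) //= [in RHS](bigD1 v) //=.
  have -> : \sum_(i | i != v) h i = \sum_(i | i != v) (1/2 : R).
    by apply: eq_bigr => i; rewrite /h => /negbTE ->.
  rewrite /h eqxx; lra.
split => [z|x y xy]; first by apply/andP; split; rewrite /h; case: (z == v); lra.
case: (eqVneq x v) => [xv|xv].
  subst x; have yv : y != v by rewrite eq_sym.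
  have [z [zy zv ne]] := key y yv.
  have yz : y != z by rewrite eq_sym.
  have := sum2_le h0 (A := Rk e 1 v y) yz.
  rewrite !inRk // eqxx orbT ne !orbT => /(_ isT isT); apply: le_trans.
  by rewrite /h (negbTE zv) eq_sym (negbTE xy); lra.
case: (eqVneq y v) => [yv|yv].
  subst y; have [z [zx zv ne]] := key x xv.
  have xz : x != z by rewrite eq_sym.
  have := sum2_le h0 (A := Rk e 1 x v) xz.
  have ne' : e x z != e v z by rewrite eq_sym.
  rewrite !inRk // eqxx ne' !orbT => /(_ isT isT); apply: le_trans.
  by rewrite /h (negbTE zv) (negbTE xv); lra.
have := sum2_le h0 (A := Rk e 1 x y) xy; rewrite !inRk // !eqxx orbT /= => /(_ isT isT); apply: le_trans.
by rewrite /h (negbTE xv) (negbTE yv); lra.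
Qed.

End Twins.

Section Lex.
Variables (T : finType) (e : rel T).
Hypothesis esym : symmetric e.
Hypothesis eirr : irreflexive e.

Lemma lex_twins : in_lex_family e -> forall x, exists y, twin e x y.
Proof.
case=> U [eH [f [sH cH fib clq adj]]] x.
have lt := fib (f x).
case: (pickP (fun y => (f y == f x) && (y != x))) => [y /andP[/eqP fy yx] | none]; last first.
  have : [set y | f y == f x] \subset [set x].
    apply/subsetP => z; rewrite !inE => fz; have := none z; rewrite fz /=.
    by move/negbFE.
  move/subset_leq_card; rewrite cards1 => le1.
  by have := leq_trans lt le1.
exists y; apply/twinP; split; first by rewrite eq_sym.
move=> z zx zy.
case: (eqVneq (f z) (f x)) => [fz|fz].
  have xz : x != z by rewrite eq_sym.
  have yz : y != z by rewrite eq_sym.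
  case: (clq (f x)) => H.
    by rewrite (H x z) // (H y z).
  by rewrite (negbTE (H x z _ _)) // (negbTE (H y z _ _)).
have fxz : f x != f z by rewrite eq_sym.
have fyz : f y != f z by rewrite fy.
by rewrite (adj x z fxz) (adj y z fyz) fy.
Qed.

Definition tweq x y := (x == y) || twin e x y.

Lemma tweq_refl x : tweq x x.
Proof. by rewrite /tweq eqxx. Qed.

Lemma tweq_sym x y : tweq x y -> tweq y x.
Proof.
rewrite /tweq => /orP[/eqP->|t]; first by rewrite eqxx.
by rewrite twin_sym ?orbT.
Qed.

Lemma tweq_trans x y z : tweq x y -> tweq y z -> tweq x z.
Proof.
rewrite /tweq => /orP[/eqP->//|txy] /orP[/eqP<-|tyz]; first by rewrite txy orbT.
case: (eqVneq x z) => //= xz.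
exact: twin_trans txy tyz xz.
Qed.

Lemma tweq_twin x y : tweq x y -> x != y -> twin e x y.
Proof. by rewrite /tweq => /orP[/eqP->|//]; rewrite eqxx. Qed.

Definition cls x := [set y | tweq x y].

Lemma cls_eq x y : (cls x == cls y) = tweq x y.
Proof.
apply/eqP/idP => [H|H].
  have : y \in cls y by rewrite inE tweq_refl.
  by rewrite -H inE.
apply/setP => z; rewrite !inE; apply/idP/idP => H'.
  exact: tweq_trans (tweq_sym H) H'.
exact: tweq_trans H H'.
Qed.

Definition isCls (A : {set T}) := [exists x, A == cls x].

Lemma clsP x : isCls (cls x).
Proof. by apply/existsP; exists x. Qed.

Definition U := {A : {set T} | isCls A}.

Definition fc x : U := exist _ (cls x) (clsP x).

Lemma fcE x y : (fc x == fc y) = tweq x y.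
Proof.
rewrite -cls_eq; apply/eqP/eqP => [/(congr1 val) //|H]; exact: val_inj.
Qed.

Lemma fc_surj (u : U) : exists x, fc x = u.
Proof.
case: u => A p; case/existsP: (p) => x /eqP Ax; exists x; apply: val_inj => /=; by rewrite Ax.
Qed.

Lemma L1 x y z : tweq x y -> tweq x z -> x != y -> x != z -> e x y = e x z.
Proof.
move=> xy xz nxy nxz; case: (eqVneq y z) => [->//|yz].
have /twinP[_ H] := tweq_twin (tweq_trans (tweq_sym xy) xz) yz.
by rewrite esym H // 1?eq_sym // esym.
Qed.

Lemma K a b c d : tweq a b -> tweq a c -> tweq a d -> a != b -> c != d ->
  e a b = e c d.
Proof.
move=> ab ac ad nab ncd; case: (eqVneq c a) => [ca|ca]; first by subst c; exact: L1 ab ad nab ncd.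
have nac : a != c by rewrite eq_sym.
rewrite (L1 ab ac nab nac) esym.
apply: L1 => //; first exact: tweq_sym.
exact: tweq_trans (tweq_sym ac) ad.
Qed.

Lemma inv1 x x' y : tweq x x' -> ~~ tweq x y -> e x y = e x' y.
Proof.
move=> xx' nxy; case: (eqVneq x x') => [->//|ne].
have /twinP[_ H] := tweq_twin xx' ne.
apply: H.
  by apply: contra nxy => /eqP->; exact: tweq_refl.
by apply: contra nxy => /eqP->.
Qed.

Lemma inv x x' y y' : tweq x x' -> tweq y y' -> ~~ tweq x y -> e x y = e x' y'.
Proof.
move=> xx' yy' nxy.
have nyx' : ~~ tweq y x'.
  apply: contra nxy => yx'; exact: tweq_trans xx' (tweq_sym yx').
by rewrite (inv1 xx' nxy) [e x' y]esym (inv1 yy' nyx') esym.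
Qed.

Definition eH (u w : U) := (u != w) && [exists x, exists y, (fc x == u) && (fc y == w) && e x y].

Lemma twins_lex : connected_graph e -> (forall x, exists y, twin e x y) -> in_lex_family e.
Proof.
move=> ce allt; exists U, eH, fc.
have adj x y : fc x != fc y -> e x y = eH (fc x) (fc y).
  move=> ne; rewrite /eH ne /=.
  apply/idP/existsP => [exy|[x' /existsP[y' /andP[/andP[/eqP fx' /eqP fy'] e']]]].
    by exists x; apply/existsP; exists y; rewrite !eqxx.
  move: ne; rewrite -fx' -fy' fcE => nxy.
  have hx : tweq x' x by rewrite -fcE fx'.
  have hy : tweq y' y by rewrite -fcE fy'.
  by rewrite -(inv hx hy nxy).
split.
- split.
    move=> u w; rewrite /eH; apply/andP/andP => -[ne /existsP[x /existsP[y /andP[/andP[a b] c]]]];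
      (split; first by rewrite eq_sym); apply/existsP; exists y; apply/existsP; exists x;
      by rewrite a b esym c.
  by move=> u; rewrite /eH eqxx.
- move=> u w; have [x0 <-] := fc_surj u; have [y0 <-] := fc_surj w.
  have := ce x0 y0; case/connectP => p pth ->.
  elim: p x0 pth => [|a p IH] x0 /=; first by move=> _; exact: connect0.
  case/andP => exa pth; apply: connect_trans (IH a pth).
  case: (eqVneq (fc x0) (fc a)) => [->|ne]; first exact: connect0.
  by apply: connect1; rewrite -adj.
- move=> u; have [x0 <-] := fc_surj u; have [y tw] := allt x0.
  have sub : [set x0; y] \subset [set z | fc z == fc x0].
    apply/subsetP => z; rewrite !inE => /orP[/eqP->|/eqP->]; first by rewrite eqxx.
    by rewrite fcE; apply: tweq_sym; rewrite /tweq tw orbT.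
  by have := subset_leq_card sub; rewrite cards2 (twin_neq tw).
- move=> u.
  case: (boolP [exists x, exists y, (fc x == u) && (fc y == u) && (x != y) && e x y]).
    move=> /existsP[a /existsP[b /andP[/andP[/andP[/eqP fa /eqP fb] ab] eab]]].
    left => c d fcc fd cd.
    have hb : tweq a b by rewrite -fcE fa fb.
    have hc : tweq a c by rewrite -fcE fa fcc.
    have hd : tweq a d by rewrite -fcE fa fd.
    by rewrite -(K hb hc hd ab cd).
  move=> /existsPn H; right => c d fcc fd.
  case: (eqVneq c d) => [->|cd]; first by rewrite eirr.
  have := H c; rewrite negb_exists => /forallP /(_ d).
  by rewrite fcc fd cd !eqxx.
- exact: adj.
Qed.

End Lex.

Unset Implicit Arguments.
Set Strict Implicit.

Theorem theorem2p8 (R : realFieldType) (T : finType) (e : rel T) :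
  simple_graph e -> connected_graph e -> (2 <= #|T|)%N ->
  (is_frac_trunc_dim e 1 (#|T|%:R / 2 : R) <-> in_lex_family e).
Proof.
move=> [esym eirr] ce _; split.
- case=> _ minh; apply: (twins_lex esym eirr ce) => v.
  case: (boolP [exists y, twin e v y]) => [/existsP[y t]|/existsPn nt]; first by exists y.
  have [h [hr hs]] := notwin_upper R nt.
  have := minh h hr; move: hs; clear; lra.
- move=> lx; split; first exact: half_witness.
  move=> h hr; exact: (lower esym hr (lex_twins lx)).
Qed.
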